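(* Let $A$ and $B$ be finite-dimensional quantum systems of dimensions $d_A$ and $d_B$, and let $U$ and $V$ be unitary operators on $AB$, with respective operator-Schmidt coefficients $u_j$ and $v_j$, each ordered into decreasing order ($u_1\geq u_2\geq\cdots$ and $v_1\geq v_2\geq\cdots$). Then $$2\left(1-\frac{\sum_j u_j v_j}{d_A d_B}\right)\leq \|U-V\|^2,$$ where $\|M\|=\max_{\|\psi\|=1}\|M|\psi\rangle\|$ is the operator norm.
   Context: The Hilbert–Schmidt inner product on operators is $(Q,P)=\mathrm{tr}(Q^\dagger P)$; an orthonormal operator basis is a set $\{Q_j\}$ with $\mathrm{tr}(Q_j^\dagger Q_k)=\delta_{jk}$. Every operator $Q$ on $AB$ has an operator-Schmidt decomposition $Q=\sum_l q_l A_l\otimes B_l$ with $q_l\geq 0$ and $\{A_l\}$, $\{B_l\}$ orthonormal operator bases for $A$ and $B$ respectively; the numbers $q_l$ (the singular values of the coefficient matrix of $Q$ in product operator bases) are the operator-Schmidt coefficients of $Q$. *)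

(* Defs.v *)
From HB Require Import structures.
From mathcomp Require Import all_boot all_order all_algebra.
From mathcomp Require Export mxtens.
Set Implicit Arguments. Unset Strict Implicit. Unset Printing Implicit Defensive.
Import Order.TTheory GRing.Theory Num.Theory.
Local Open Scope ring_scope.

(* Complex scalars: any numeric algebraically closed field C (e.g. R[i] for a
   real closed field R, or algC). *)

Definition adj (C : numClosedFieldType) m n (M : 'M[C]_(m, n)) : 'M[C]_(n, m) :=
  map_mx Num.conj M^T.

Definition hs (C : numClosedFieldType) n (Q P : 'M[C]_n) : C := \tr (adj Q *m P).

Definition unitary (C : numClosedFieldType) n (U : 'M[C]_n) : Prop :=
  adj U *m U = 1%:M.

Definition orthonormal_ops (C : numClosedFieldType) n k (F : 'I_k -> 'M[C]_n) : Prop :=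
  forall j l, hs (F j) (F l) = (j == l)%:R.

Definition op_basis (C : numClosedFieldType) n (F : 'I_(n ^ 2) -> 'M[C]_n) : Prop :=
  orthonormal_ops F.

(* Since the two bases have dA^2 and dB^2
   elements, the sum runs over l < min(dA^2, dB^2), pairing the first
   min(dA^2,dB^2) elements of each basis. *)
Definition op_schmidt (C : numClosedFieldType) dA dB
  (Q : 'M[C]_(dA * dB)) (q : 'I_(minn (dA ^ 2) (dB ^ 2)) -> C) : Prop :=
  exists (FA : 'I_(dA ^ 2) -> 'M[C]_dA) (FB : 'I_(dB ^ 2) -> 'M[C]_dB),
    [/\ op_basis FA, op_basis FB,
        forall l, 0 <= q l &
        Q = \sum_(l < minn (dA ^ 2) (dB ^ 2))
              q l *: tensmx (FA (widen_ord (geq_minl _ _) l))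
                            (FB (widen_ord (geq_minr _ _) l))].

Definition vnorm (C : numClosedFieldType) n (psi : 'cV[C]_n) : C :=
  sqrtC (\sum_i `|psi i 0| ^+ 2).

Definition is_opnorm (C : numClosedFieldType) n (M : 'M[C]_n) (c : C) : Prop :=
  (forall psi : 'cV[C]_n, vnorm psi = 1 -> vnorm (M *m psi) <= c) /\
  (exists2 psi : 'cV[C]_n, vnorm psi = 1 & vnorm (M *m psi) = c).

Definition nonincreasing (C : numClosedFieldType) k (u : 'I_k -> C) : Prop :=
  forall i j : 'I_k, (i <= j)%N -> u j <= u i.

(* Main.v *)
Require Import Defs.
From HB Require Import structures.
From mathcomp Require Import all_boot all_order all_algebra.
From mathcomp Require Import ring.
Import Order.TTheory GRing.Theory Num.Theory.
Local Open Scope ring_scope.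

Lemma sum_prefix (R : numDomainType) n k (f : nat -> R) : (k <= n)%N ->
  (forall i, (i < n)%N -> 0 <= f i) -> \sum_(i < k) f i <= \sum_(i < n) f i.
Proof.
move=> hk hf.
rewrite (big_ord_widen n f hk) big_mkcond /=.
apply: ler_sum => i _; case: ifP => _ //; exact: hf.
Qed.

Lemma sum_ind (R : numDomainType) n k : (k <= n)%N ->
  \sum_(i < n) ((i < k)%N%:R : R) = k%:R.
Proof.
move=> hk.
transitivity (\sum_(i < k) (1:R)); last by rewrite sumr_const card_ord.
rewrite (big_ord_widen n (fun _ => (1:R)) hk) [RHS]big_mkcond /=.
by apply: eq_bigr => i _; case: ifP.
Qed.

Lemma abel (R : numDomainType) n (u d : nat -> R) :
  (forall i j, (i <= j)%N -> (j < n)%N -> u j <= u i) ->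
  (forall i, (i < n)%N -> 0 <= u i) ->
  (forall k, (k <= n)%N -> \sum_(l < k) d l <= 0) ->
  \sum_(l < n) u l * d l <= 0.
Proof.
elim: n u => [|n IH] u hm hp hd; first by rewrite big_ord0.
have -> : \sum_(l < n.+1) u l * d l =
   \sum_(l < n) (u l - u n) * d l + u n * \sum_(l < n.+1) d l.
  rewrite big_ord_recr /= big_ord_recr /= mulrDr addrA; congr (_ + _).
  rewrite mulr_sumr -big_split /=; apply: eq_bigr => i _; ring.
rewrite -[X in _ <= X](addr0 0); apply: lerD.
  apply: (IH (fun l => u l - u n)).
  - move=> i j hij hj; rewrite lerD2r; apply: hm => //; exact: leqW.
  - move=> i hi; rewrite subr_ge0; apply: hm => //; exact: ltnW.
  - move=> k hk; apply: hd; exact: leqW.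
apply: mulr_ge0_le0; first exact: hp.
exact: hd.
Qed.

Lemma step1 (R : numDomainType) n k (v c : nat -> R) : (k <= n)%N ->
  (forall i j, (i <= j)%N -> (j < n)%N -> v j <= v i) ->
  (forall i, (i < n)%N -> 0 <= v i) ->
  (forall m, (m < n)%N -> 0 <= c m) ->
  (forall m, (m < n)%N -> c m <= 1) ->
  \sum_(m < n) c m <= k%:R ->
  \sum_(m < n) v m * c m <= \sum_(m < k) v m.
Proof.
move=> hk hm hp hc0 hc1 hs.
pose t := if (k < n)%N then v k else 0.
pose e m := ((m < k)%N%:R : R).
have ht : 0 <= t by rewrite /t; case: ifP => h //; exact: hp.
have -> : \sum_(m < k) v m = \sum_(m < n) v m * e m.
  rewrite (big_ord_widen n v hk) big_mkcond /=; apply: eq_bigr => i _.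
  by rewrite /e; case: ifP; rewrite ?mulr1 ?mulr0.
have H : forall m : 'I_n, v m * c m <= v m * e m + t * (c m - e m).
  move=> m; rewrite -subr_le0.
  have -> : v m * c m - (v m * e m + t * (c m - e m)) = (v m - t) * (c m - e m) by ring.
  rewrite /e; case: (ltnP m k) => hmk /=; rewrite ?mulr1n ?mulr0n.
    apply: mulr_ge0_le0; last by rewrite subr_le0; apply: hc1.
    rewrite subr_ge0 /t; case: ifP => hkn; last exact: hp.
    by apply: hm => //; exact: ltnW.
  apply: mulr_le0_ge0; last by rewrite subr0; apply: hc0.
  have hkn : (k < n)%N by exact: leq_ltn_trans hmk (ltn_ord m).
  by rewrite subr_le0 /t hkn; apply: hm.
apply: (le_trans (ler_sum (index_enum _) (P := xpredT) (fun (m : 'I_n) _ => H m))).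
rewrite big_split /= -mulr_sumr sumrB sum_ind //.
rewrite -[X in _ <= X]addr0 lerD2l.
apply: mulr_ge0_le0 => //; by rewrite subr_le0.
Qed.

Lemma comb (R : numDomainType) n (u v : nat -> R) (P : nat -> nat -> R) :
  (forall i j, (i <= j)%N -> (j < n)%N -> u j <= u i) ->
  (forall i, (i < n)%N -> 0 <= u i) ->
  (forall i j, (i <= j)%N -> (j < n)%N -> v j <= v i) ->
  (forall i, (i < n)%N -> 0 <= v i) ->
  (forall l m, (l < n)%N -> (m < n)%N -> 0 <= P l m) ->
  (forall l, (l < n)%N -> \sum_(m < n) P l m <= 1) ->
  (forall m, (m < n)%N -> \sum_(l < n) P l m <= 1) ->
  \sum_(l < n) \sum_(m < n) u l * v m * P l m <= \sum_(l < n) u l * v l.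
Proof.
move=> hum hup hvm hvp hP hr hc.
pose w l := \sum_(m < n) v m * P l m.
have -> : \sum_(l < n) \sum_(m < n) u l * v m * P l m = \sum_(l < n) u l * w l.
  apply: eq_bigr => l _; rewrite /w mulr_sumr; apply: eq_bigr => m _; by rewrite mulrA.
rewrite -subr_le0 -sumrB.
have -> : \sum_(l < n) (u l * w l - u l * v l) = \sum_(l < n) u l * (w l - v l).
  by apply: eq_bigr => l _; rewrite mulrBr.
apply: (@abel R n u (fun l => w l - v l)) => // k hk.
rewrite sumrB subr_le0.
have -> : \sum_(l < k) w l = \sum_(m < n) v m * \sum_(l < k) P l m.
  rewrite /w exchange_big /=; apply: eq_bigr => m _; by rewrite mulr_sumr.
apply: (@step1 R n k v (fun m => \sum_(l < k) P l m)) => //.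
- move=> m hm; apply: sumr_ge0 => l _; apply: hP => //; exact: leq_trans (ltn_ord l) hk.
- move=> m hm; apply: le_trans (hc m hm).
  apply: (@sum_prefix R n k (fun l => P l m)) => // i hi; exact: hP.
- rewrite exchange_big /=.
  apply: le_trans (ler_sum _ (fun (l : 'I_k) _ => hr l (leq_trans (ltn_ord l) hk))) _.
  by rewrite sumr_const card_ord.
Qed.

Section HS.
Variable C : numClosedFieldType.

Lemma hsE n (Q P : 'M[C]_n) : hs Q P = \sum_i \sum_j (Q j i)^* * P j i.
Proof.
rewrite /hs /mxtrace; apply: eq_bigr => i _; rewrite mxE; apply: eq_bigr => j _.
by rewrite /adj !mxE.
Qed.

Lemma hsC n (Q P : 'M[C]_n) : hs P Q = (hs Q P)^*.
Proof.
rewrite !hsE rmorph_sum; apply: eq_bigr => i _; rewrite rmorph_sum.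
by apply: eq_bigr => j _; rewrite rmorphM /= conjCK mulrC.
Qed.

Lemma hsDr n (Q P1 P2 : 'M[C]_n) : hs Q (P1 + P2) = hs Q P1 + hs Q P2.
Proof.
rewrite !hsE -big_split; apply: eq_bigr => i _; rewrite -big_split.
by apply: eq_bigr => j _; rewrite mxE mulrDr.
Qed.

Lemma hsNr n (Q P : 'M[C]_n) : hs Q (- P) = - hs Q P.
Proof.
rewrite !hsE -sumrN; apply: eq_bigr => i _; rewrite -sumrN.
by apply: eq_bigr => j _; rewrite mxE mulrN.
Qed.

Lemma hsBr n (Q P1 P2 : 'M[C]_n) : hs Q (P1 - P2) = hs Q P1 - hs Q P2.
Proof. by rewrite hsDr hsNr. Qed.

Lemma hsBl n (Q1 Q2 P : 'M[C]_n) : hs (Q1 - Q2) P = hs Q1 P - hs Q2 P.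
Proof. by rewrite hsC hsBr rmorphB /= -!hsC. Qed.

Lemma hsZr n (Q P : 'M[C]_n) a : hs Q (a *: P) = a * hs Q P.
Proof.
rewrite !hsE mulr_sumr; apply: eq_bigr => i _; rewrite mulr_sumr.
by apply: eq_bigr => j _; rewrite mxE mulrCA.
Qed.

Lemma hs_sumr n k (Q : 'M[C]_n) (F : 'I_k -> 'M[C]_n) a :
  hs Q (\sum_(l < k) a l *: F l) = \sum_(l < k) a l * hs Q (F l).
Proof.
elim/big_rec2: _ => [|l x y _ <-].
  by rewrite hsE big1 // => i _; rewrite big1 // => j _; rewrite mxE mulr0.
by rewrite hsDr hsZr.
Qed.

Lemma hs_suml n k (P : 'M[C]_n) (F : 'I_k -> 'M[C]_n) a :
  hs (\sum_(l < k) a l *: F l) P = \sum_(l < k) (a l)^* * hs (F l) P.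
Proof.
rewrite hsC hs_sumr rmorph_sum; apply: eq_bigr => l _.
by rewrite rmorphM /= -hsC.
Qed.

Lemma hs_ge0 n (Q : 'M[C]_n) : 0 <= hs Q Q.
Proof.
rewrite hsE; apply: sumr_ge0 => i _; apply: sumr_ge0 => j _.
by rewrite -normCKC exprn_ge0.
Qed.

Lemma tr_tens m n (A : 'M[C]_m) (B : 'M[C]_n) : \tr (A *t B) = \tr A * \tr B.
Proof. by rewrite /mxtrace mulr_sum; apply: eq_bigr => k _; rewrite mxE. Qed.

Lemma adj_tens m n (A : 'M[C]_m) (B : 'M[C]_n) : adj (A *t B) = adj A *t adj B.
Proof. by rewrite /adj trmx_tens map_mxT. Qed.

Lemma hs_tens m n (A A' : 'M[C]_m) (B B' : 'M[C]_n) :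
  hs (A *t B) (A' *t B') = hs A A' * hs B B'.
Proof. by rewrite /hs adj_tens tensmx_mul tr_tens. Qed.

Lemma bessel n k (F : 'I_k -> 'M[C]_n) (Q : 'M[C]_n) : orthonormal_ops F ->
  \sum_i `|hs (F i) Q| ^+ 2 <= hs Q Q.
Proof.
move=> hF.
pose c i := hs (F i) Q.
pose S := \sum_(i < k) c i *: F i.
pose T := \sum_i `|c i| ^+ 2.
have hT : 0 <= T by apply: sumr_ge0 => i _; exact: exprn_ge0.
have hQS : hs Q S = T.
  rewrite hs_sumr; apply: eq_bigr => i _; by rewrite normCK -hsC.
have hSQ : hs S Q = T by rewrite hsC hQS geC0_conj.
have hSF : forall j, hs (F j) S = c j.
  move=> j; rewrite hs_sumr (bigD1 j) //= big1 => [|i hij]; first by rewrite hF eqxx mulr1 addr0.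
  by rewrite hF eq_sym (negbTE hij) mulr0.
have hSS : hs S S = T.
  rewrite {1}/S hs_suml; apply: eq_bigr => j _.
  by rewrite normCKC; congr (_ * _); apply: hSF.
have := @hs_ge0 n (Q - S).
rewrite hsBl !hsBr hQS hSQ hSS.
have -> : hs Q Q - T - (T - T) = hs Q Q - T by ring.
by rewrite subr_ge0.
Qed.

End HS.
Set Implicit Arguments. Unset Strict Implicit.

Definition ext (C : numClosedFieldType) N (f : 'I_N -> C) (k : nat) : C := oapp f 0 (insub k).
Lemma extE (C : numClosedFieldType) N (f : 'I_N -> C) (i : 'I_N) : ext f i = f i.
Proof. by rewrite /ext valK. Qed.
Lemma ext_lt (C : numClosedFieldType) N (f : 'I_N -> C) k (h : (k < N)%N) : ext f k = f (Ordinal h).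
Proof. by rewrite /ext insubT. Qed.

Lemma sum_widen (C : numClosedFieldType) K N (h : (N <= K)%N) (f : 'I_K -> C) :
  (forall i, 0 <= f i) ->
  \sum_(m < N) f (widen_ord h m) <= \sum_(m < K) f m.
Proof.
move=> hf.
rewrite -(@big_ord_narrow_cond _ 0 +%R N K xpredT f h) /=.
rewrite [X in _ <= X](bigID (fun i : 'I_K => (i < N)%N)) /= lerDl.
by apply: sumr_ge0.
Qed.

Lemma amgm (C : numClosedFieldType) (a b : C) : 0 <= a -> 0 <= b ->
  a * b <= (a ^+ 2 + b ^+ 2) / 2.
Proof.
move=> ha hb; rewrite -subr_ge0.
have h2 : (2 : C) != 0 by rewrite pnatr_eq0.
have -> : (a ^+ 2 + b ^+ 2) / 2 - a * b = (a - b) ^+ 2 / 2 by field.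
apply: divr_ge0; last by rewrite ler0n.
by rewrite -realEsqr rpredB // ger0_real.
Qed.

Theorem proposition1 (C : numClosedFieldType) (dA dB : nat)
  (hA : (0 < dA)%N) (hB : (0 < dB)%N)
  (U V : 'M[C]_(dA * dB))
  (u v : 'I_(minn (dA ^ 2) (dB ^ 2)) -> C)
  (hU : unitary U) (hV : unitary V)
  (hu : op_schmidt U u) (hv : op_schmidt V v)
  (hud : nonincreasing u) (hvd : nonincreasing v)
  (c : C) (hc : is_opnorm (U - V) c) :
  2 * (1 - (\sum_j u j * v j) / (dA * dB)%:R) <= c ^+ 2.
Proof.
set N := minn (dA ^ 2) (dB ^ 2).
set D : C := (dA * dB)%:R.
have hD : 0 < D by rewrite ltr0n muln_gt0 hA hB.
case: hu => FA [FB [hFA hFB hu0 hUe]].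
case: hv => GA [GB [hGA hGB hv0 hVe]].
pose X (l m : 'I_N) := hs (FA (widen_ord (geq_minl (dA ^ 2) (dB ^ 2)) l))
                          (GA (widen_ord (geq_minl (dA ^ 2) (dB ^ 2)) m)).
pose Y (l m : 'I_N) := hs (FB (widen_ord (geq_minr (dA ^ 2) (dB ^ 2)) l))
                          (GB (widen_ord (geq_minr (dA ^ 2) (dB ^ 2)) m)).
set h := hs U V.
have hh : h = \sum_l \sum_m u l * v m * (X l m * Y l m).
  rewrite /h hUe hVe hs_suml; apply: eq_bigr => l _.
  rewrite geC0_conj // hs_sumr mulr_sumr; apply: eq_bigr => m _.
  by rewrite hs_tens mulrA.
pose P (l m : 'I_N) := (`|X l m| ^+ 2 + `|Y l m| ^+ 2) / 2.
have hnorm : `|h| <= \sum_l \sum_m u l * v m * P l m.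
  rewrite hh; apply: le_trans (ler_norm_sum _ _ _) _; apply: ler_sum => l _.
  apply: le_trans (ler_norm_sum _ _ _) _; apply: ler_sum => m _.
  rewrite normrM (ger0_norm (mulr_ge0 (hu0 l) (hv0 m))) normrM.
  by apply: ler_wpM2l; [exact: mulr_ge0 | apply: amgm].
have hP0 : forall l m, 0 <= P l m.
  move=> l m; apply: divr_ge0; last by rewrite ler0n.
  by apply: addr_ge0; apply: exprn_ge0.
have hsplit : forall (a b : 'I_N -> C), (forall i, 0 <= a i) -> (forall i, 0 <= b i) ->
    \sum_i a i <= 1 -> \sum_i b i <= 1 -> \sum_i (a i + b i) / 2 <= 1.
  move=> a b _ _ ha hb; rewrite -mulr_suml big_split /=.
  rewrite ler_pdivrMr ?ltr0n // mul1r.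
  by apply: le_trans (lerD ha hb) _; rewrite -[2]/(1+1)%:R natrD.
have hrow : forall l, \sum_m P l m <= 1.
  move=> l; apply: hsplit => [i|i||]; rewrite ?exprn_ge0 //.
    have -> : \sum_i `|X l i| ^+ 2 = \sum_(i < N) (fun m => `|hs (GA m) (FA (widen_ord (geq_minl (dA ^ 2) (dB ^ 2)) l))| ^+ 2) (widen_ord (geq_minl (dA ^ 2) (dB ^ 2)) i).
      by apply: eq_bigr => i _; rewrite /X hsC norm_conjC.
    apply: le_trans; first (apply: (@sum_widen C _ _ (geq_minl (dA ^ 2) (dB ^ 2)) (fun m => `|hs (GA m) (FA (widen_ord (geq_minl (dA ^ 2) (dB ^ 2)) l))| ^+ 2)) => i; exact: exprn_ge0).
    apply: le_trans; first exact: (@bessel C _ _ GA _ hGA).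
    by rewrite hFA eqxx.
  have -> : \sum_i `|Y l i| ^+ 2 = \sum_(i < N) (fun m => `|hs (GB m) (FB (widen_ord (geq_minr (dA ^ 2) (dB ^ 2)) l))| ^+ 2) (widen_ord (geq_minr (dA ^ 2) (dB ^ 2)) i).
    by apply: eq_bigr => i _; rewrite /Y hsC norm_conjC.
  apply: le_trans; first (apply: (@sum_widen C _ _ (geq_minr (dA ^ 2) (dB ^ 2)) (fun m => `|hs (GB m) (FB (widen_ord (geq_minr (dA ^ 2) (dB ^ 2)) l))| ^+ 2)) => i; exact: exprn_ge0).
  apply: le_trans; first exact: (@bessel C _ _ GB _ hGB).
  by rewrite hFB eqxx.
have hcol : forall m, \sum_l P l m <= 1.
  move=> m; apply: hsplit => [i|i||]; rewrite ?exprn_ge0 //.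
    have -> : \sum_i `|X i m| ^+ 2 = \sum_(i < N) (fun l => `|hs (FA l) (GA (widen_ord (geq_minl (dA ^ 2) (dB ^ 2)) m))| ^+ 2) (widen_ord (geq_minl (dA ^ 2) (dB ^ 2)) i) by [].
    apply: le_trans; first (apply: (@sum_widen C _ _ (geq_minl (dA ^ 2) (dB ^ 2)) (fun l => `|hs (FA l) (GA (widen_ord (geq_minl (dA ^ 2) (dB ^ 2)) m))| ^+ 2)) => i; exact: exprn_ge0).
    apply: le_trans; first exact: (@bessel C _ _ FA _ hFA).
    by rewrite hGA eqxx.
  have -> : \sum_i `|Y i m| ^+ 2 = \sum_(i < N) (fun l => `|hs (FB l) (GB (widen_ord (geq_minr (dA ^ 2) (dB ^ 2)) m))| ^+ 2) (widen_ord (geq_minr (dA ^ 2) (dB ^ 2)) i) by [].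
  apply: le_trans; first (apply: (@sum_widen C _ _ (geq_minr (dA ^ 2) (dB ^ 2)) (fun l => `|hs (FB l) (GB (widen_ord (geq_minr (dA ^ 2) (dB ^ 2)) m))| ^+ 2)) => i; exact: exprn_ge0).
  apply: le_trans; first exact: (@bessel C _ _ FB _ hFB).
  by rewrite hGB eqxx.
set s := \sum_j u j * v j.
have hcomb : \sum_l \sum_m u l * v m * P l m <= s.
  have E1 : forall (f : 'I_N -> C) i j, (i <= j)%N -> (j < N)%N -> (forall (a b : 'I_N), (a <= b)%N -> f b <= f a) -> ext f j <= ext f i.
    move=> f i j hij hj hf; rewrite (ext_lt f hj) (ext_lt f (leq_ltn_trans hij hj)); exact: hf.
  have E2 : forall (f : 'I_N -> C) i, (i < N)%N -> (forall a, 0 <= f a) -> 0 <= ext f i.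
    by move=> f i hi hf; rewrite (ext_lt f hi).
  have E3 : forall l m : 'I_N, ext (fun i => ext (P i) m) l = P l m.
    by move=> l m; rewrite extE extE.
  have H := @comb C N (ext u) (ext v) (fun l m => ext (fun i => ext (P i) m) l)
    (fun i j hij hj => E1 u i j hij hj hud) (fun i hi => E2 u i hi hu0)
    (fun i j hij hj => E1 v i j hij hj hvd) (fun i hi => E2 v i hi hv0).
  have e1 : \sum_(l < N) \sum_(m < N) ext u l * ext v m * ext (fun i => ext (P i) m) l
       = \sum_l \sum_m u l * v m * P l m.
    by apply: eq_bigr => l _; apply: eq_bigr => m _; rewrite E3 !extE.
  have e2 : \sum_(l < N) ext u l * ext v l = s.
    by apply: eq_bigr => l _; rewrite !extE.
  rewrite -e1 -e2; apply: H.
  - move=> l m hl hm; move: (hP0 (Ordinal hl) (Ordinal hm)); rewrite -E3 => H0; exact: H0.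
  - move=> l hl; move: (hrow (Ordinal hl)) => H0; apply: le_trans H0.
    by rewrite le_eqVlt; apply/orP; left; apply/eqP; apply: eq_bigr => m _; rewrite -E3.
  - move=> m hm; move: (hcol (Ordinal hm)) => H0; apply: le_trans H0.
    by rewrite le_eqVlt; apply/orP; left; apply/eqP; apply: eq_bigr => l _; rewrite -E3.
have hhs : `|h| <= s := le_trans hnorm hcomb.
case: hc => hc1 [psi0 _ hc0].
have hn0 : forall n (x : 'cV[C]_n), 0 <= \sum_i `|x i 0| ^+ 2.
  by move=> n x; apply: sumr_ge0 => i _; apply: exprn_ge0.
have c_ge0 : 0 <= c by rewrite -hc0 /vnorm sqrtC_ge0.
have hMM : hs (U - V) (U - V) <= D * c ^+ 2.
  rewrite hsE.
  have hi : forall i, \sum_j ((U - V) j i)^* * (U - V) j i <= c ^+ 2.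
    move=> i.
    have e1 : vnorm (delta_mx i 0 : 'cV[C]_(dA * dB)) = 1.
      rewrite /vnorm (bigD1 i) //= big1 => [|j hj]; last by rewrite mxE (negbTE hj) normr0 expr0n.
      by rewrite mxE !eqxx normr1 expr1n addr0 sqrtC1.
    have := hc1 _ e1; rewrite -colE => hle.
    have -> : \sum_j ((U - V) j i)^* * (U - V) j i = vnorm (col i (U - V)) ^+ 2.
      by rewrite /vnorm sqrtCK; apply: eq_bigr => j _; rewrite [col _ _ _ _]mxE normCKC.
    by apply: lerXn2r; rewrite ?nnegrE // /vnorm sqrtC_ge0.
  apply: le_trans (ler_sum _ (fun i _ => hi i)) _.
  by rewrite sumr_const card_ord /D mulr_natl.
have hUU : hs U U = D by rewrite /hs hU mxtrace1.
have hVV : hs V V = D by rewrite /hs hV mxtrace1.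
have hMM' : hs (U - V) (U - V) = 2 * D - (h + h^*).
  rewrite hsBl !hsBr hUU hVV -/h (hsC _ _ U V) -/h; ring.
have hre : h + h^* <= 2 * s.
  have hreal : (h + h^*) \is Num.real by rewrite CrealE rmorphD /= conjCK addrC.
  apply: le_trans (real_ler_norm hreal) _.
  apply: le_trans (ler_normD _ _) _.
  rewrite norm_conjC.
  have -> : 2 * s = s + s by ring.
  exact: lerD.
have e : 2 * (1 - s / D) = (2 * D - 2 * s) / D.
  by field; rewrite !pnatr_eq0 -!lt0n hA hB.
rewrite e ler_pdivrMr //.
apply: le_trans (_ : 2 * D - (h + h^*) <= _).
  by rewrite lerD2l lerN2.
by rewrite -hMM' mulrC.
Qed.
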